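(* Let $F$ be a finite simple graph, and for $n\in\mathbb{N}$ let $T^*_n$ be a graphical value of the constraint $T(G)=t(F,h^G)$ on $\mathcal{G}_n$ with Lagrange multiplier $\theta^*_n$. Assume that $\lim_{n\to\infty}T^*_n=T^*_\infty$ and $\lim_{n\to\infty}\theta^*_n=\theta^*_\infty$ exist. Then $$\theta^*_\infty\in\arg\max_{\theta\in\mathbb{R}}\big[\theta T^*_\infty-\psi_\infty(\theta)\big],$$ where $\psi_\infty(\theta):=\lim_{n\to\infty}\psi_n(\theta)=\sup_{\tilde h\in\tilde{\mathcal W}}\big[\theta T(\tilde h)-I(\tilde h)\big]$.
   Context: $\mathcal{G}_n$ is the set of simple undirected graphs on vertex set $\{1,\dots,n\}$. A graphon is a symmetric measurable $h:[0,1]^2\to[0,1]$; $\mathcal W$ is the space of graphons. $\tilde{\mathcal W}$ is the quotient of $\mathcal W$ under $h_1\sim h_2$ iff $\delta_\square(h_1,h_2)=0$, where $\delta_\square(h_1,h_2)=\inf_{\sigma_1,\sigma_2}\sup_{S,T\subset[0,1]}\big|\int_{S\times T}(h_1(\sigma_1x,\sigma_1y)-h_2(\sigma_2x,\sigma_2y))\,dx\,dy\big|$, the infimum being over measure-preserving bijections of $[0,1]$. For $G\in\mathcal{G}_n$ the empirical graphon is $h^G(x,y)=1$ if there is an edge between vertices $\lceil nx\rceil$ and $\lceil ny\rceil$, and $0$ otherwise. For $F$ with vertex set $\{1,\dots,m\}$ and edge set $E(F)$, $t(F,h)=\int_{[0,1]^m}\prod_{\{i,j\}\in E(F)}h(x_i,x_j)\,dx_1\cdots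 dx_m$, and $T(h):=t(F,h)$, $T(G):=t(F,h^G)$. $I(u)=\tfrac12u\log u+\tfrac12(1-u)\log(1-u)$ for $u\in[0,1]$ (with $0\log 0=0$), and $I(h)=\int_{[0,1]^2}I(h(x,y))\,dx\,dy$, which is well defined on $\tilde{\mathcal W}$. A value $T^*_n$ is graphical if $T(G)=T^*_n$ for some $G\in\mathcal G_n$. For $\theta\in\mathbb{R}$, $\psi_n(\theta)=n^{-2}\log\sum_{G\in\mathcal{G}_n}e^{n^2\theta T(G)}$. The canonical ensemble is $\mathrm{P}_{\mathrm{can}}(G)=\exp\big(n^2[\theta^*_nT(G)-\psi_n(\theta^*_n)]\big)$, where the Lagrange multiplier $\theta^*_n$ is the unique real number such that $\sum_G T(G)\mathrm{P}_{\mathrm{can}}(G)=T^*_n$. It is known that the limit $\lim_n\psi_n(\theta)$ exists and equals $\sup_{\tilde h\in\tilde{\mathcal W}}[\theta T(\tilde h)-I(\tilde h)]$. *)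

(* Defs.v *)
From HB Require Import structures.
From mathcomp Require Import all_boot all_order all_algebra.
From mathcomp Require Import all_classical all_reals.
From mathcomp Require Import topology normedtype sequences exp.
Unset Printing Implicit Defensive.
Import Order.TTheory GRing.Theory Num.Theory.
Import numFieldNormedType.Exports.
Local Open Scope ring_scope.

(* A simple undirected graph on vertex set 'I_n (= {1,..,n} shifted to
   {0,..,n-1}) is given by its symmetric, loopless set of ordered
   adjacent pairs. *)
Definition simpleb {n : nat} (G : {set 'I_n * 'I_n}) : bool :=
  [forall i, forall j, ((i, j) \in G) == ((j, i) \in G)] &&
  [forall i, (i, i) \notin G].

(* T(G) = t(F, h^G), written out: integrating the step function h^G over
   [0,1]^m gives n^{-m} times the number of maps phi : V(F) -> V(G) sending
   each edge {i,j} of F (counted once, i < j) to an edge of G. *)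
Definition Tdens (R : realType) {m : nat} (EF : {set 'I_m * 'I_m})
    {n : nat} (G : {set 'I_n * 'I_n}) : R :=
  (n%:R ^- m) *
  \sum_(phi : {ffun 'I_m -> 'I_n})
     \prod_(p in EF | (nat_of_ord p.1 < nat_of_ord p.2)%N)
        (((phi p.1, phi p.2) \in G) : nat)%:R.

Definition psi_n (R : realType) {m : nat} (EF : {set 'I_m * 'I_m})
    (n : nat) (theta : R) : R :=
  (n%:R ^+ 2)^-1 *
  ln (\sum_(G : {set 'I_n * 'I_n} | simpleb G)
        expR (n%:R ^+ 2 * theta * Tdens R EF G)).

Definition Pcan (R : realType) {m : nat} (EF : {set 'I_m * 'I_m})
    (n : nat) (theta : R) (G : {set 'I_n * 'I_n}) : R :=
  expR (n%:R ^+ 2 * (theta * Tdens R EF G - psi_n R EF n theta)).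

Definition can_mean (R : realType) {m : nat} (EF : {set 'I_m * 'I_m})
    (n : nat) (theta : R) : R :=
  \sum_(G : {set 'I_n * 'I_n} | simpleb G) Tdens R EF G * Pcan R EF n theta G.

(* Main.v *)
Require Import Defs.
From HB Require Import structures.
From mathcomp Require Import all_boot all_order all_algebra.
From mathcomp Require Import all_classical all_reals.
From mathcomp Require Import topology normedtype sequences exp.
From mathcomp Require Import ring lra.
Import Order.TTheory GRing.Theory Num.Theory.
Import numFieldNormedType.Exports.
Local Open Scope classical_set_scope.
Local Open Scope ring_scope.

Section Aux.
Variable R : realType.

Lemma key_ineq (I : finType) (P : pred I) (e T : I -> R) (s : R) :
  (forall i, P i -> 0 < e i) -> 0 < \sum_(i | P i) e i ->
  (\sum_(i | P i) e i) *
    expR (s * ((\sum_(i | P i) T i * e i) / \sum_(i | P i) e i))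
  <= \sum_(i | P i) e i * expR (s * T i).
Proof.
move=> epos Zpos.
set Z := \sum_(i | P i) e i; set S := \sum_(i | P i) T i * e i.
set c := s * (S / Z).
have h : forall i, P i -> e i * (expR c * (1 + (s * T i - c))) <= e i * expR (s * T i).
  move=> i Pi; rewrite ler_wpM2l ?(ltW (epos i Pi)) //.
  have -> : expR (s * T i) = expR c * expR (s * T i - c).
    by rewrite -expRD; congr expR; ring.
  rewrite ler_wpM2l ?(ltW (expR_gt0 _)) //.
  by apply: expR_ge1Dx.
apply: le_trans (ler_sum _ h).
have -> : \sum_(i | P i) e i * (expR c * (1 + (s * T i - c)))
   = \sum_(i | P i) (expR c * (1 - c) * e i + expR c * s * (T i * e i)).
  by apply: eq_bigr => i _; ring.
rewrite big_split /= -!mulr_sumr -/Z -/S.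
have hS : S = (S / Z) * Z by rewrite divfK // gt_eqF.
have -> : expR c * (1 - c) * Z + expR c * s * S = Z * expR c.
  rewrite /c; field; by rewrite gt_eqF.
by [].
Qed.


Variables (m : nat) (EF : {set 'I_m * 'I_m}).

Lemma Tdens_bounds n (G : {set 'I_n * 'I_n}) : (0 < n)%N ->
  0 <= Tdens R EF G <= 1.
Proof.
move=> n0; rewrite /Tdens.
have hn : 0 < n%:R ^+ m :> R by rewrite exprn_gt0 // ltr0n.
apply/andP; split.
  apply: mulr_ge0; first by rewrite invr_ge0 ltW.
  by apply: sumr_ge0 => phi _; apply: prodr_ge0 => p _; apply: ler0n.
have hs : \sum_(phi : {ffun 'I_m -> 'I_n})
     \prod_(p in EF | (nat_of_ord p.1 < nat_of_ord p.2)%N)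
        (((phi p.1, phi p.2) \in G) : nat)%:R <= \sum_(phi : {ffun 'I_m -> 'I_n}) (1 : R).
  apply: ler_sum => phi _; apply: prodr_ile1 => p _.
  by case: (_ \in G); rewrite ?ler01 ?lexx.
rewrite sumr_const card_ffun !card_ord natrX in hs.
apply: le_trans (ler_wpM2l _ hs) _; first by rewrite invr_ge0 ltW.
by rewrite mulVf // lt0r_neq0.
Qed.

Definition Zf n (th : R) := \sum_(G : {set 'I_n * 'I_n} | simpleb G)
        expR (n%:R ^+ 2 * th * Tdens R EF G).

Lemma simpleb0 n : simpleb (finset.set0 : {set 'I_n * 'I_n}).
Proof.
rewrite /simpleb; apply/andP; split.
  by apply/forallP => i; apply/forallP => j; rewrite !inE.
by apply/forallP => i; rewrite !inE.
Qed.

Lemma Zf_gt0 n th : 0 < Zf n th.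
Proof.
rewrite /Zf (bigD1 finset.set0) ?simpleb0 //=.
have := expR_gt0 (n%:R ^+ 2 * th * Tdens R EF (finset.set0 : {set 'I_n * 'I_n})).
have : 0 <= \sum_(G : {set 'I_n * 'I_n} | simpleb G && (G != finset.set0))
        expR (n%:R ^+ 2 * th * Tdens R EF G).
  by apply: sumr_ge0 => G _; apply: ltW; apply: expR_gt0.
lra.
Qed.

Lemma psi_nE n th : psi_n R EF n th = (n%:R ^+ 2)^-1 * ln (Zf n th).
Proof. by []. Qed.

Lemma can_meanE n th : (0 < n)%N ->
  can_mean R EF n th =
  (\sum_(G : {set 'I_n * 'I_n} | simpleb G) Tdens R EF G * expR (n%:R ^+ 2 * th * Tdens R EF G))
   / Zf n th.
Proof.
move=> n0; rewrite /can_mean mulr_suml; apply: eq_bigr => G _.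
rewrite /Pcan psi_nE -mulrA; congr (_ * _).
have a0 : n%:R ^+ 2 != 0 :> R by rewrite expf_neq0 // pnatr_eq0 -lt0n.
have -> : n%:R ^+ 2 * (th * Tdens R EF G - (n%:R ^+ 2)^-1 * ln (Zf n th))
   = n%:R ^+ 2 * th * Tdens R EF G + - ln (Zf n th).
  by rewrite mulrBr !mulrA mulfV // mul1r.
by rewrite expRD expRN lnK // posrE Zf_gt0.
Qed.

Lemma can_mean_bounds n th : (0 < n)%N -> 0 <= can_mean R EF n th <= 1.
Proof.
move=> n0; rewrite can_meanE //.
have Z0 := Zf_gt0 n th.
rewrite divr_ge0 ?(ltW Z0) ?ler_pdivrMr // ?mul1r /=.
  apply: ler_sum => G _; rewrite ler_piMl ?(ltW (expR_gt0 _)) //.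
  by case/andP: (@Tdens_bounds n G n0).
apply: sumr_ge0 => G _; apply: mulr_ge0; last exact: ltW (expR_gt0 _).
by case/andP: (@Tdens_bounds n G n0).
Qed.

Lemma convex_psi n th0 th : (0 < n)%N ->
  psi_n R EF n th0 + (th - th0) * can_mean R EF n th0 <= psi_n R EF n th.
Proof.
move=> n0; set a : R := n%:R ^+ 2.
have a0 : 0 < a by rewrite exprn_gt0 // ltr0n.
have K := @key_ineq _ (fun G : {set 'I_n * 'I_n} => simpleb G)
  (fun G => expR (a * th0 * Tdens R EF G)) (fun G => Tdens R EF G) (a * (th - th0))
  (fun G _ => expR_gt0 _) (Zf_gt0 n th0).
rewrite -/(Zf n th0) -can_meanE // in K.
have E : \sum_(G : {set 'I_n * 'I_n} | simpleb G)
   expR (a * th0 * Tdens R EF G) * expR (a * (th - th0) * Tdens R EF G) = Zf n th.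
  apply: eq_bigr => G _; rewrite -expRD; congr expR; rewrite /a; ring.
rewrite E in K.
rewrite -ler_ln ?posrE ?mulr_gt0 ?expR_gt0 ?Zf_gt0 // lnM ?posrE ?expR_gt0 ?Zf_gt0 // expRK in K.
rewrite !psi_nE -/a.
rewrite -(ler_pM2l a0) mulrDr !mulrA mulfV ?gt_eqF // !mul1r.
lra.
Qed.

End Aux.

Theorem lemma1p4 (R : realType) (m : nat) (EF : {set 'I_m * 'I_m})
    (Tstar theta : nat -> R) (Tinf thinf : R) (psiinf : R -> R) :
  simpleb EF ->
  (exists N : nat, forall n : nat, (N <= n)%N ->
     (exists G : {set 'I_n * 'I_n}, simpleb G /\ Tdens R EF G = Tstar n) /\
     can_mean R EF n (theta n) = Tstar n /\
     (forall th : R, can_mean R EF n th = Tstar n -> th = theta n)) ->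
  Tstar n @[n --> \oo] --> Tinf ->
  theta n @[n --> \oo] --> thinf ->
  (forall th : R, psi_n R EF n th @[n --> \oo] --> psiinf th) ->
  forall th : R, th * Tinf - psiinf th <= thinf * Tinf - psiinf thinf.
Proof.
move=> _ [N HN] cT cth cpsi th.
have c1 : th * Tstar n - psi_n R EF n th @[n --> \oo] --> th * Tinf - psiinf th.
  apply: cvgB => //; apply: cvgM => //; exact: cvg_cst.
have c2 : theta n * Tstar n - psi_n R EF n thinf + `|theta n - thinf|
     @[n --> \oo] --> thinf * Tinf - psiinf thinf.
  rewrite -[X in _ --> X]addr0; apply: cvgD; first by apply: cvgB => //; apply: cvgM.
  have -> : (0:R) = `|0 : R| by rewrite normr0.
  apply: cvg_norm.
  by rewrite -(subrr thinf); apply: cvgB => //; exact: cvg_cst.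
apply: (ler_cvg_to c1 c2).
exists (maxn N 1) => // n /=; rewrite geq_max => /andP[hN hn].
have [_ [hm _]] := HN n hN.
have K1 := convex_psi R m EF n (theta n) th hn.
have K2 := convex_psi R m EF n thinf (theta n) hn.
have /andP[b0 b1] := can_mean_bounds R m EF n thinf hn.
rewrite hm in K1.
have hd := ler_norm (theta n - thinf).
have hd' := ler_norm (thinf - theta n).
rewrite distrC in hd'.
nra.
Qed.
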